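(* Consider the clustering defined in the context, for a graph $G=(V,E)$ with integer weights $w\colon E\to\{1,\dots,W\}$ and parameters $p\in(0,1)$, $r\in\mathbb{N}$. For every outcome of the sampled values, each cluster $U$ has strong diameter at most $2r$, i.e., $d_{G[U]}(x,y)\leq 2r$ for all $x,y\in U$.
   Context: Setting (the clustering): $G=(V,E)$ is a graph with integer edge weights $w\colon E\to\{1,\dots,W\}$, $d_G$ the weighted shortest-path distance, and each vertex has a distinct identifier $\mathrm{ID}(v)$. Let $p\in(0,1)$ and $r\in\mathbb{N}$. Let $\mathrm{GeomCap}(p,r)$ be the distribution on $\{0,\dots,r\}$ with $\Pr[=i]=p(1-p)^i$ for $0\leq i\leq r-1$ and $\Pr[=r]=(1-p)^r$. Each vertex $v$ independently samples $\delta_v\sim\mathrm{GeomCap}(p,r)$. For $u,x\in V$ define $d^{(u)}(s,x):=r-\delta_u+d_G(u,x)$ and the level $d_{G'}(s,x):=\min_{u\in V} d^{(u)}(s,x)$. The cluster center $c_x$ of $x$ is the vertex $u$ with smallest $\mathrm{ID}$ among those with $d^{(u)}(s,x)=d_{G'}(s,x)$; the cluster of a center $c$ is $\{x\in V: c_x=c\}$. For $U\subseteq V$, $G[U]$ is the induced subgraph with weighted distance $d_{G[U]}$. *)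

(* Defs.v *)
From mathcomp Require Import all_boot.
Set Implicit Arguments. Unset Strict Implicit. Unset Printing Implicit Defensive.

Section Clustering.
Variables (T : finType) (e : rel T) (w : T -> T -> nat).

Fixpoint walk_weight (x : T) (s : seq T) : nat :=
  match s with
  | [::] => 0
  | y :: s' => w x y + walk_weight y s'
  end.

Definition reach_in (U : T -> Prop) (x y : T) (k : nat) : Prop :=
  exists s : seq T,
    [/\ path e x s, U x, (forall z, z \in s -> U z), last x s = y
      & walk_weight x s <= k].

(* d_{G[U]}(x,y) = d  (the weighted shortest-path distance in the induced
   subgraph G[U]; no such d exists when y is unreachable, i.e. d = +oo) *)
Definition dist_in (U : T -> Prop) (x y : T) (d : nat) : Prop :=
  reach_in U x y d /\ forall k, reach_in U x y k -> d <= k.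

Definition distG (x y : T) (d : nat) : Prop := dist_in (fun _ => True) x y d.

Variables (r : nat) (delta : T -> nat) (ID : T -> nat).

(* d^{(u)}(s,x) = r - delta_u + d_G(u,x)  (equals l) *)
Definition dval (u x : T) (l : nat) : Prop :=
  exists d, distG u x d /\ l = r - delta u + d.

(* d_{G'}(s,x) = min_u d^{(u)}(s,x)  (equals l) *)
Definition level (x : T) (l : nat) : Prop :=
  (exists u, dval u x l) /\ forall u l', dval u x l' -> l <= l'.

Definition center (x c : T) : Prop :=
  exists l, [/\ level x l, dval c x l & forall u, dval u x l -> ID c <= ID u].

Definition cluster (c : T) : T -> Prop := fun x => center x c.

End Clustering.

(* Main.v *)
From Stdlib Require Import Classical.
Require Import Defs.
From mathcomp Require Import all_boot.
From mathcomp Require Import zify.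

Set Implicit Arguments. Unset Strict Implicit.
Section Aux.
Variables (T : finType) (e : rel T) (w : T -> T -> nat).

Lemma ww_cat x s1 s2 :
  walk_weight w x (s1 ++ s2) = walk_weight w x s1 + walk_weight w (last x s1) s2.
Proof. by elim: s1 x => [|y s IH] x //=; rewrite IH addnA. Qed.

Lemma reach_cat U x y z a b :
  reach_in e w U x y a -> reach_in e w U y z b -> reach_in e w U x z (a + b).
Proof.
move=> [s1 [p1 Ux Hs1 l1 w1]] [s2 [p2 Uy Hs2 l2 w2]].
exists (s1 ++ s2); split => //.
- by rewrite cat_path p1 l1 p2.
- by move=> t; rewrite mem_cat => /orP [] ?; [apply: Hs1|apply: Hs2].
- by rewrite last_cat l1.
- by rewrite ww_cat l1; apply: leq_add.
Qed.

Lemma reach_mono U x y a b : a <= b -> reach_in e w U x y a -> reach_in e w U x y b.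
Proof.
move=> ab [s [p Ux Hs l ws]]; exists s; split => //; exact: leq_trans ws ab.
Qed.

Lemma reach_U U x y k : reach_in e w U x y k -> U x /\ U y.
Proof.
move=> [s [p Ux Hs <- _]]; split => //.
case: s p Hs => [|t s] //= _ Hs; apply: Hs; exact: mem_last.
Qed.

Lemma reach_refl U x : U x -> reach_in e w U x x 0.
Proof. by move=> Ux; exists [::]; split. Qed.

Lemma dist_exists U x y k : reach_in e w U x y k ->
  exists2 d, dist_in e w U x y d & d <= k.
Proof.
elim: k {-2}k (leqnn k) => [|n IH] k kn Hk.
  exists k; last by []; split => // j _; lia.
case: (classic (exists j, j < k /\ reach_in e w U x y j)).
  move=> [j [jk Hj]]. have [d Hd dj] := IH j ltac:(lia) Hj.
  by exists d => //; lia.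
move=> Hn; exists k => //; split => // j Hj.
case: (leqP k j) => // jk; exfalso; apply: Hn; by exists j.
Qed.

Lemma reach_rev U x y k :
  symmetric e -> (forall a b, e a b -> w a b = w b a) ->
  reach_in e w U x y k -> reach_in e w U y x k.
Proof.
move=> esym wsym [s [p Ux Hs l ws]].
elim: s x p Ux Hs l k ws => [|t s IH] x /= p Ux Hs l k ws.
  by subst y; apply: (reach_mono (leq0n k)); apply: reach_refl.
move/andP: p => [ext pt].
have Ut : U t by apply: Hs; rewrite inE eqxx.
have H1 := IH t pt Ut (fun z hz => Hs z ltac:(by rewrite inE hz orbT)) l
          (walk_weight w t s) (leqnn _).
have H2 : reach_in e w U t x (w t x).
  exists [:: x]; split => //=; first by rewrite andbT esym.
  - by move=> z; rewrite inE => /eqP ->.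
  - by rewrite addn0.
apply: reach_mono (reach_cat H1 H2); have := wsym _ _ ext; lia.
Qed.

Lemma split_walk U c x s :
  path e c s -> U c -> (forall z, z \in s -> U z) -> last c s = x ->
  forall z, z \in c :: s ->
  exists a b, [/\ reach_in e w U c z a, reach_in e w U z x b
                & a + b <= walk_weight w c s].
Proof.
elim: s c => [|t s IH] c /= p Uc Hs l z.
  rewrite inE => /eqP ->; subst x; exists 0, 0; split => //; exact: reach_refl.
move/andP: p => [ect pt].
have Ut : U t by apply: Hs; rewrite inE eqxx.
have Hs' : forall z, z \in s -> U z by move=> q hq; apply: Hs; rewrite inE hq orbT.
rewrite inE => /orP [/eqP ->|zin].
  exists 0, (w c t + walk_weight w t s); split => //; first exact: reach_refl.
  exists (t :: s); split => //=; by [rewrite ect | ].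
have [a [b [Ha Hb ab]]] := IH t pt Ut Hs' l z zin.
have He : reach_in e w U c t (w c t).
  exists [:: t]; split => //=; first by rewrite ect.
  - by move=> q; rewrite inE => /eqP ->.
  - by rewrite addn0.
exists (w c t + a), b; split => //; first exact: reach_cat He Ha.
lia.
Qed.

Variables (r : nat) (delta : T -> nat) (ID : T -> nat).

Lemma key x c l dx z a b :
  level e w r delta x l -> distG e w c x dx -> l = r - delta c + dx ->
  (forall u, dval e w r delta u x l -> ID c <= ID u) ->
  reach_in e w (fun _ => True) c z a -> reach_in e w (fun _ => True) z x b ->
  a + b <= dx -> center e w r delta ID z c.
Proof.
move=> [_ Hlev] Hdx Hl Hid Ha Hb ab.
have [a0 Ha0 a0a] := dist_exists Ha.
have bound : forall u du, distG e w u z du ->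
    exists2 du', dval e w r delta u x (r - delta u + du') & du' <= du + b.
  move=> u du [Hdu _].
  have [du' Hdu' le] := dist_exists (reach_cat Hdu Hb).
  by exists du' => //; exists du'.
exists (r - delta c + a0); split.
- split; first by exists c; exists a0.
  move=> u l' [du [Hdu ->]].
  have [du' Hd le] := bound u du Hdu.
  have := Hlev _ _ Hd; lia.
- by exists a0.
- move=> u [du [Hdu Hl']].
  have [du' Hd le] := bound u du Hdu.
  have := Hlev _ _ Hd => ge.
  apply: Hid; suff -> : l = r - delta u + du' by [].
  lia.
Qed.

End Aux.

Theorem corollary8 (T : finType) (e : rel T) (w : T -> T -> nat) (W : nat)
    (ID : T -> nat) (r : nat) (delta : T -> nat) :
  symmetric e -> irreflexive e ->
  (forall x y, e x y -> w x y = w y x) ->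
  (forall x y, e x y -> 1 <= w x y <= W) ->
  injective ID ->
  (forall v, delta v <= r) ->
  forall c x y : T,
    cluster e w r delta ID c x -> cluster e w r delta ID c y ->
    exists d, dist_in e w (cluster e w r delta ID c) x y d /\ d <= 2 * r.
Proof.
move=> esym _ wsym _ _ dr c.
have side : forall x, cluster e w r delta ID c x ->
   exists2 dx, reach_in e w (cluster e w r delta ID c) c x dx & dx <= r.
  move=> x Hx; have Hx' := Hx.
  move: Hx' => [l [Hlev [dx [Hdx Hl]] Hid]].
  have Hxx : dval e w r delta x x (r - delta x).
    exists 0; split; last by rewrite addn0.
    by split; [apply: reach_refl | ].
  have := (proj2 Hlev) _ _ Hxx => lr.
  have dxr : dx <= r by have := dr c; lia.
  exists dx => //.
  move: (Hdx) => [[s [p _ _ ls ws]] _].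
  have Hall : forall z, z \in c :: s -> cluster e w r delta ID c z.
    move=> z zin.
    have [a [b [Ha Hb ab]]] := @split_walk T e w (fun _ => True) c x s p I (fun _ _ => I) ls z zin.
    apply: (key Hlev Hdx Hl Hid Ha Hb); exact: leq_trans ab ws.
  exists s; split => //.
  - by apply: Hall; rewrite inE eqxx.
  - by move=> z zs; apply: Hall; rewrite inE zs orbT.
move=> x y Hx Hy.
have [dx Hdx lx] := side x Hx.
have [dy Hdy ly] := side y Hy.
have [d Hd le] := dist_exists (reach_cat (reach_rev esym wsym Hdx) Hdy).
exists d; split => //; lia.
Qed.
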